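(* Let $\mathcal A=(S,R)$ be a finitary argumentation network ($S\neq\varnothing$, $R\subseteq S\times S$, each element has finitely many attackers), and let $\Delta_{\mathcal A}$ be the $\mathbf{CN}$-theory $$\Delta_{\mathcal A}=\{x\mid x\in S \text{ unattacked}\}\cup\{y\leftrightarrow \textstyle\bigwedge_{zRy}Nz\mid y\in S\}\cup\{z\to Ny\mid zRy\}\cup\{(\textstyle\bigwedge_{zRy}\neg z)\wedge(\bigvee_{zRy}\neg Nz)\to \neg y\wedge\neg Ny\mid y\in S\}.$$ Let $E=\{x\in S\mid \Delta_{\mathcal A}\vdash_{\mathbf{CN}}x\}$. Then $E$ is the grounded extension of $\mathcal A$.
   Context: The logic $\mathbf{CN}$: the elements of $S$ are basic atoms; atomic formulas are $q$ and $Nq$ for basic atoms $q$; formulas are built with classical connectives; $\Delta\vdash_{\mathbf{CN}}A$ iff $\Delta\cup\{Nq\to\neg q\}\vdash A$ in classical propositional logic (treating each $q$ and $Nq$ as distinct classical atoms). Empty conjunctions are $\top$, empty disjunctions $\bot$. A complete extension of $(S,R)$ is a conflict-free set $E\subseteq S$ (no $x,y\in E$ with $xRy$) which contains exactly those arguments it defends ($x$ is defended by $E$ if every attacker of $x$ is attacked by some element of $E$); equivalently, the set of arguments labelled in by a legitimate Caminada labelling. The grounded (ground) extension is the least complete extension with respect to inclusion. *)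

(* Defs.v *)
From Stdlib Require Import List Bool.
Import ListNotations.
Set Implicit Arguments.

(* Atoms of CN over a set S of basic atoms: q and Nq. *)
Inductive cn_atom (S : Type) : Type :=
| Pos : S -> cn_atom S
| Nat : S -> cn_atom S.

Inductive form (S : Type) : Type :=
| FAtom : cn_atom S -> form S
| FTop : form S
| FBot : form S
| FNeg : form S -> form S
| FAnd : form S -> form S -> form S
| FOr  : form S -> form S -> form S
| FImp : form S -> form S -> form S
| FIff : form S -> form S -> form S.

Arguments FTop {S}.
Arguments FBot {S}.

Definition atm {S : Type} (q : S) : form S := FAtom (Pos q).
Definition Natm {S : Type} (q : S) : form S := FAtom (Nat q).

Definition bigAnd {S : Type} (l : list (form S)) : form S := fold_right (@FAnd S) FTop l.
Definition bigOr  {S : Type} (l : list (form S)) : form S := fold_right (@FOr S) FBot l.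

Fixpoint eval {S : Type} (v : cn_atom S -> bool) (A : form S) : bool :=
  match A with
  | FAtom a => v a
  | FTop => true
  | FBot => false
  | FNeg B => negb (eval v B)
  | FAnd B C => eval v B && eval v C
  | FOr B C => eval v B || eval v C
  | FImp B C => implb (eval v B) (eval v C)
  | FIff B C => eqb (eval v B) (eval v C)
  end.

(* Classical propositional consequence (for arbitrary, possibly infinite,
   theories), taken semantically (equivalent to derivability by
   soundness and strong completeness of classical propositional logic). *)
Definition CPL_cons {S : Type} (Gamma : form S -> Prop) (A : form S) : Prop :=
  forall v : cn_atom S -> bool,
    (forall B, Gamma B -> eval v B = true) -> eval v A = true.

Definition CN_axioms {S : Type} (B : form S) : Prop :=
  exists q : S, B = FImp (Natm q) (FNeg (atm q)).

Definition CN_cons {S : Type} (Delta : form S -> Prop) (A : form S) : Prop :=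
  CPL_cons (fun B => Delta B \/ CN_axioms B) A.

Definition finitary {S : Type} (R : S -> S -> Prop) : Prop :=
  forall y : S, exists l : list S, forall z, R z y <-> In z l.

Definition conflict_free {S : Type} (R : S -> S -> Prop) (E : S -> Prop) : Prop :=
  forall x y, E x -> E y -> ~ R x y.

Definition defends {S : Type} (R : S -> S -> Prop) (E : S -> Prop) (x : S) : Prop :=
  forall y, R y x -> exists z, E z /\ R z y.

Definition complete_ext {S : Type} (R : S -> S -> Prop) (E : S -> Prop) : Prop :=
  conflict_free R E /\ (forall x, E x <-> defends R E x).

Definition grounded_ext {S : Type} (R : S -> S -> Prop) (E : S -> Prop) : Prop :=
  complete_ext R E /\
  (forall E' : S -> Prop, complete_ext R E' -> forall x, E x -> E' x).

Definition attackers_list {S : Type} (R : S -> S -> Prop) (y : S) (l : list S) : Prop :=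
  forall z, R z y <-> In z l.

Definition Delta_A {S : Type} (R : S -> S -> Prop) (B : form S) : Prop :=
  (exists x, (forall z, ~ R z x) /\ B = atm x)
  \/ (exists y l, attackers_list R y l /\
        B = FIff (atm y) (bigAnd (map Natm l)))
  \/ (exists z y, R z y /\ B = FImp (atm z) (Natm y))
  \/ (exists y l, attackers_list R y l /\
        B = FImp (FAnd (bigAnd (map (fun z => FNeg (atm z)) l))
                       (bigOr (map (fun z => FNeg (Natm z)) l)))
                 (FAnd (FNeg (atm y)) (FNeg (Natm y)))).

(* Main.v *)
Require Import Defs.
From Stdlib Require Import List Bool.
From Stdlib Require Import ClassicalEpsilon Classical.
Import ListNotations.

Definition bP (P : Prop) : bool := if excluded_middle_informative P then true else false.
Lemma bP_true (P : Prop) : bP P = true <-> P.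
Proof. unfold bP; destruct (excluded_middle_informative P); split; congruence || tauto. Qed.

Lemma eval_bigAnd {S} (v : cn_atom S -> bool) l :
  eval v (bigAnd l) = true <-> forall f, In f l -> eval v f = true.
Proof.
  induction l as [|a l IH]; simpl.
  - split; [intros _ f []|auto].
  - rewrite andb_true_iff, IH. split.
    + intros [H1 H2] f [<-|Hf]; auto.
    + intros H; split; auto.
Qed.

Lemma eval_bigOr {S} (v : cn_atom S -> bool) l :
  eval v (bigOr l) = true <-> exists f, In f l /\ eval v f = true.
Proof.
  induction l as [|a l IH]; simpl.
  - split; [discriminate|intros [f [[] _]]].
  - rewrite orb_true_iff, IH. split.
    + intros [H|[f [Hf H]]]; eauto.
    + intros [f [[<-|Hf] H]]; eauto.
Qed.

Section G.
Variable S : Type.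
Variable R : S -> S -> Prop.

Definition valE (E : S -> Prop) (a : cn_atom S) : bool :=
  match a with
  | Pos x => bP (E x)
  | Nat x => bP (exists z, E z /\ R z x)
  end.

Lemma valE_sat (E : S -> Prop) : complete_ext R E ->
  forall B, (Delta_A R B \/ CN_axioms B) -> eval (valE E) B = true.
Proof.
  intros [Hcf Hdef] B [HB|HB].
  - destruct HB as [[x [Hx ->]]|[[y [l [Hl ->]]]|[[z [y [Hzy ->]]]|[y [l [Hl ->]]]]]]; simpl.
    + apply bP_true, Hdef. intros y Hy; exfalso; eapply Hx; eauto.
    + apply eqb_true_iff. 
      assert (E y <-> eval (valE E) (bigAnd (map Natm l)) = true).
      { rewrite eval_bigAnd, Hdef. split.
        - intros Hd f Hf. apply in_map_iff in Hf as [z [<- Hz]]. simpl.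
          apply bP_true. apply Hl in Hz. destruct (Hd z Hz) as [w [? ?]]; eauto.
        - intros H z Hz. apply Hl in Hz.
          specialize (H (Natm z) (in_map _ _ _ Hz)). simpl in H.
          exact (proj1 (bP_true _) H). }
      destruct (bP (E y)) eqn:Ey, (eval (valE E) (bigAnd (map Natm l))) eqn:Ea; auto.
      * apply (proj1 (bP_true _)) in Ey. apply H in Ey. congruence.
      * assert (bP (E y) = true) by (apply bP_true, H; reflexivity). congruence.
    + destruct (bP (E z)) eqn:Ez; simpl; auto.
      apply (proj1 (bP_true _)) in Ez. apply bP_true. eauto.
    + destruct (eval (valE E) (bigAnd (map (fun z => FNeg (atm z)) l))) eqn:H1; simpl; auto.
      destruct (eval (valE E) (bigOr (map (fun z => FNeg (Natm z)) l))) eqn:H2; simpl; auto.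
      rewrite eval_bigAnd in H1. rewrite eval_bigOr in H2.
      destruct H2 as [f [Hf Hev]]. apply in_map_iff in Hf as [z [<- Hz]].
      simpl in Hev. apply negb_true_iff in Hev.
      assert (Hnin : forall w, R w y -> ~ E w).
      { intros w Hw Ew. apply Hl in Hw.
        specialize (H1 _ (in_map (fun z => FNeg (atm z)) _ _ Hw)). simpl in H1.
        apply negb_true_iff in H1. assert (bP (E w) = true) by (apply bP_true; auto). congruence. }
      apply andb_true_iff; split; apply negb_true_iff.
      * destruct (bP (E y)) eqn:Ey; auto. apply (proj1 (bP_true _)) in Ey.
        apply Hdef in Ey. apply Hl in Hz. destruct (Ey z Hz) as [w [Ew Rw]].
        assert (bP (exists w, E w /\ R w z) = true) by (apply bP_true; eauto). congruence.
      * destruct (bP (exists w, E w /\ R w y)) eqn:Ey; auto. apply (proj1 (bP_true _)) in Ey.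
        destruct Ey as [w [Ew Rw]]. exfalso; eapply Hnin; eauto.
  - destruct HB as [q ->]. simpl.
    destruct (bP (exists z, E z /\ R z q)) eqn:H; simpl; auto.
    apply (proj1 (bP_true _)) in H as [z [Ez Rz]].
    destruct (bP (E q)) eqn:Eq; auto. apply (proj1 (bP_true _)) in Eq. exfalso; exact (Hcf z q Ez Eq Rz).
Qed.

Definition G (x : S) : Prop :=
  forall X : S -> Prop, (forall y, defends R X y -> X y) -> X x.

Lemma defends_mono (X Y : S -> Prop) x : (forall y, X y -> Y y) -> defends R X x -> defends R Y x.
Proof. intros H D y Hy. destruct (D y Hy) as [z [? ?]]; eauto. Qed.

Lemma G_pre x : defends R G x -> G x.
Proof.
  intros D X HX. apply HX. eapply defends_mono; [|exact D]. intros y Gy; apply Gy, HX.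
Qed.

Lemma G_post x : G x -> defends R G x.
Proof.
  intros Gx. apply (Gx (defends R G)). intros y D. eapply defends_mono; [|exact D].
  exact G_pre.
Qed.

Lemma G_cf : conflict_free R G.
Proof.
  assert (H : forall x, G x -> G x /\ (forall y, G y -> ~ R y x /\ ~ R x y)).
  { intros x Gx. apply Gx. intros z D. split.
    - apply G_pre. eapply defends_mono; [|exact D]. intros w [? ?]; auto.
    - intros y Gy. split.
      + intros Ryz. destruct (D y Ryz) as [w [[Gw Pw] Rwy]]. apply (Pw y Gy). exact Rwy.
      + intros Rzy. destruct (G_post _ Gy z Rzy) as [w [Gw Rwz]].
        destruct (D w Rwz) as [u [[Gu Pu] Ruw]]. apply (Pu w Gw). exact Ruw. }
  intros x y Gx Gy Rxy. exact (proj1 (proj2 (H y Gy) x Gx) Rxy).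
Qed.

Lemma G_complete : complete_ext R G.
Proof. split; [exact G_cf|]. intros x; split; [apply G_post|apply G_pre]. Qed.

End G.
Arguments valE {S}. Arguments valE_sat {S R E}. Arguments G {S}. Arguments G_complete {S}.

Theorem theorem8 (S : Type) (R : S -> S -> Prop)
  (Hne : inhabited S) (Hfin : finitary R) :
  grounded_ext R (fun x : S => CN_cons (Delta_A R) (atm x)).
Proof.
  assert (least : forall E', complete_ext R E' -> forall x, CN_cons (Delta_A R) (atm x) -> E' x).
  { intros E' HE x Hx. specialize (Hx (valE R E') (valE_sat HE)). simpl in Hx.
    apply (proj1 (bP_true _)) in Hx. exact Hx. }
  assert (eqG : forall x, CN_cons (Delta_A R) (atm x) <-> G R x).
  { intros x; split.
    - apply least, G_complete.
    - intros Gx v Hv. simpl. apply (Gx (fun y => v (Pos y) = true)).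
      intros y D. destruct (Hfin y) as [l Hl].
      assert (Hiff : eval v (FIff (atm y) (bigAnd (map Natm l))) = true).
      { apply Hv. left. right. left. exists y, l. split; auto. }
      simpl in Hiff. apply (proj1 (eqb_true_iff _ _)) in Hiff. rewrite Hiff.
      apply eval_bigAnd. intros f Hf. apply in_map_iff in Hf as [z [<- Hz]].
      apply Hl in Hz. destruct (D z Hz) as [w [Ew Rwz]].
      assert (Himp : eval v (FImp (atm w) (Natm z)) = true).
      { apply Hv. left. right. right. left. exists w, z. auto. }
      simpl in Himp. rewrite Ew in Himp. exact Himp. }
  split.
  - destruct (G_complete R) as [Hcf Hd]. split.
    + intros x y Hx Hy. apply eqG in Hx; apply eqG in Hy. eauto.
    + intros x. rewrite eqG, Hd. split; eapply defends_mono; intros y; apply eqG.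
  - exact least.
Qed.
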